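(* For any $b\in B_k$ there exist unique $b_-\in\mathcal{U}_-$ and $b_+\in\mathcal{P}_+$ such that $b=b_-b_+$.
   Context: Let $\mathfrak{g}=\mathfrak{gl}_n(\mathbb{C})$, $\mathfrak{t}$ a Cartan subalgebra, $k>1$, $T=\sum_{i=1}^{k-1}T_iz^{-i}$ with $T_i\in\mathfrak{t}$, $T_{k-1}\neq0$. $B_k=\{b=\sum_{i=0}^{k-1}b_iz^i:b_0=1,b_i\in\mathfrak{g}\}\subset\mathrm{GL}_n(\mathbb{C}[z]/(z^k))$. For $i=0,\dots,k-2$ let $\mathbb{C}^n=\bigoplus_{p\in J_i}V^{(i)}_p$ be the decomposition into simultaneous eigenspaces of $(T_{i+1},\dots,T_{k-1})$, with $\pi_i:J_j\to J_i$ ($j\le i$) the natural surjections; fix total orders on the $J_i$ such that for $i<k-2$, $\pi_{i+1}(p)<\pi_{i+1}(q)\Rightarrow p<q$. Let $\mathfrak{p}_i^+=\bigoplus_{p\ge q}\mathrm{Hom}(V^{(i)}_p,V^{(i)}_q)$, $\mathfrak{u}_i^-=\bigoplus_{p<q}\mathrm{Hom}(V^{(i)}_p,V^{(i)}_q)$ (sums over $p,q\in J_i$), $\mathfrak{p}^+_{k-1}=\mathfrak{g}$, $\mathfrak{u}^-_{k-1}=0$. $\mathcal{U}_-=\{b\in B_k:b_i\in\mathfrak{u}_i^-,1\le i\le k-1\}$, $\mathcal{P}_+=\{b\in B_k:b_i\in\mathfrak{p}_i^+,1\le i\le k-1\}$. *)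

(* Defs.v *)
From HB Require Import structures.
From mathcomp Require Import all_boot all_order all_algebra.
From mathcomp Require Import complex.
From mathcomp Require Import Rstruct.
Set Implicit Arguments. Unset Strict Implicit. Unset Printing Implicit Defensive.
Import Order.TTheory GRing.Theory Num.Theory.
Local Open Scope ring_scope.

Definition C : fieldType := (Rdefinitions.R)[i].

(* Cartan subalgebras of gl_n(C) are exactly P (diagonal matrices) P^{-1}
   for invertible P; [in_cartan P X] says X lies in that Cartan subalgebra. *)
Definition in_cartan (n : nat) (P X : 'M[C]_n) : Prop :=
  exists D : 'M[C]_n, is_diag_mx D /\ X = P *m D *m invmx P.

(* v lies in the simultaneous eigenspace V^{(i)}_p of (T_{i+1},...,T_{k-1})
   for the eigenvalue tuple p = (p_0, ..., p_{k-2-i}), p_j the eigenvalue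
   of T_{i+1+j}. *)
Definition inV (n k : nat) (T : nat -> 'M[C]_n) (i : nat) (p : seq C)
    (v : 'cV[C]_n) : Prop :=
  forall j : nat, (j < k.-1 - i)%N -> T (i.+1 + j)%N *m v = p`_j *: v.

Definition inJ (n k : nat) (T : nat -> 'M[C]_n) (i : nat) (p : seq C) : Prop :=
  size p = (k.-1 - i)%N /\ exists v : 'cV[C]_n, v != 0 /\ inV k T i p v.

Definition strict_total_on (J : seq C -> Prop) (r : seq C -> seq C -> Prop)
    : Prop :=
  [/\ (forall p, J p -> ~ r p p),
      (forall p q s, J p -> J q -> J s -> r p q -> r q s -> r p s)
    & (forall p q, J p -> J q -> p <> q -> r p q \/ r q p)].

(* X maps every V^{(i)}_p into the sum of the V^{(i)}_q with sel p q,
   i.e. X lies in  (+)_{p,q in J_i, sel p q} Hom(V^{(i)}_p, V^{(i)}_q). *)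
Definition block_sum (n k : nat) (T : nat -> 'M[C]_n) (i : nat)
    (sel : seq C -> seq C -> Prop) (X : 'M[C]_n) : Prop :=
  forall (p : seq C) (v : 'cV[C]_n), inJ k T i p -> inV k T i p v ->
    exists s : seq (seq C * 'cV[C]_n),
      (forall x, x \in s -> [/\ inJ k T i x.1, sel p x.1 & inV k T i x.1 x.2])
      /\ X *m v = \sum_(x <- s) x.2.

(* p_i^+ = (+)_{p >= q} Hom(V_p, V_q) for i < k-1, and p_{k-1}^+ = g *)
Definition in_pplus (n k : nat) (T : nat -> 'M[C]_n)
    (ord : nat -> seq C -> seq C -> Prop) (i : nat) (X : 'M[C]_n) : Prop :=
  if (i < k.-1)%N then block_sum k T i (fun p q => q = p \/ ord i q p) X
  else True.

(* u_i^- = (+)_{p < q} Hom(V_p, V_q) for i < k-1, and u_{k-1}^- = 0 *)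
Definition in_uminus (n k : nat) (T : nat -> 'M[C]_n)
    (ord : nat -> seq C -> seq C -> Prop) (i : nat) (X : 'M[C]_n) : Prop :=
  if (i < k.-1)%N then block_sum k T i (fun p q => ord i p q) X
  else X = 0.

(* An element b = sum_{i<k} b_i z^i of GL_n(C[z]/(z^k)) is represented by
   its coefficient sequence b : nat -> 'M_n; only b_0, ..., b_{k-1} matter. *)
Definition inB (n : nat) (b : nat -> 'M[C]_n) : Prop := b 0%N = 1%:M.

(* product in C[z]/(z^k) (coefficients; truncation handled by eqk) *)
Definition trunc_mul (n : nat) (a c : nat -> 'M[C]_n) (m : nat) : 'M[C]_n :=
  \sum_(j < m.+1) a j *m c (m - j)%N.

Definition eqk (n k : nat) (a c : nat -> 'M[C]_n) : Prop :=
  forall m : nat, (m < k)%N -> a m = c m.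

Definition in_Uminus (n k : nat) (T : nat -> 'M[C]_n)
    (ord : nat -> seq C -> seq C -> Prop) (b : nat -> 'M[C]_n) : Prop :=
  inB b /\ forall i : nat, (1 <= i <= k.-1)%N -> in_uminus k T ord i (b i).

Definition in_Pplus (n k : nat) (T : nat -> 'M[C]_n)
    (ord : nat -> seq C -> seq C -> Prop) (b : nat -> 'M[C]_n) : Prop :=
  inB b /\ forall i : nat, (1 <= i <= k.-1)%N -> in_pplus k T ord i (b i).

(* Main.v *)
Require Import Defs.
From HB Require Import structures.
From mathcomp Require Import all_boot all_order all_algebra.
From mathcomp Require Import complex Rstruct.
From Stdlib Require Import Classical ClassicalEpsilon.
From mathcomp Require Import zify.
Set Implicit Arguments. Unset Strict Implicit. Unset Printing Implicit Defensive.
Import Order.TTheory GRing.Theory Num.Theory.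
Local Open Scope ring_scope.

Definition pdec (Q : Prop) : bool :=
  if excluded_middle_informative Q then true else false.
Lemma pdecP (Q : Prop) : reflect Q (pdec Q).
Proof. by rewrite /pdec; case: excluded_middle_informative => h; constructor. Qed.

Definition Dm (n : nat) (P : 'M[C]_n) (T : nat -> 'M[C]_n) t :=
  invmx P *m T t *m P.
Definition tau (n k : nat) (P : 'M[C]_n) (T : nat -> 'M[C]_n) i (a : 'I_n) :=
  mkseq (fun j => Dm P T (i.+1 + j)%N a a) (k.-1 - i).
Definition ev (n : nat) (P : 'M[C]_n) (a : 'I_n) : 'cV[C]_n := P *m delta_mx a 0.
Definition cj (n : nat) (P : 'M[C]_n) (X : 'M[C]_n) := invmx P *m X *m P.

Lemma cjK n (P X : 'M[C]_n) : P \in unitmx -> P *m cj P X *m invmx P = X.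
Proof. by move=> u; rewrite /cj !mulmxA mulmxV // mul1mx mulmxK. Qed.

Lemma cjI n (P X Y : 'M[C]_n) : P \in unitmx -> cj P X = cj P Y -> X = Y.
Proof. by move=> u e; rewrite -(cjK X u) -(cjK Y u) e. Qed.

Lemma TDm n (P : 'M[C]_n) T t : P \in unitmx -> T t = P *m Dm P T t *m invmx P.
Proof. by move=> u; rewrite (cjK (T t) u). Qed.

Lemma diag_of n (P : 'M[C]_n) T t : P \in unitmx -> in_cartan P (T t) ->
  is_diag_mx (Dm P T t).
Proof.
move=> u [D [dD e]]; rewrite /Dm e !mulmxA mulVmx // mul1mx mulmxKV //.
Qed.

Lemma diag_col n (D : 'M[C]_n) (w : 'cV[C]_n) a :
  is_diag_mx D -> (D *m w) a 0 = D a a * w a 0.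
Proof.
move=> /is_diag_mxP dD; rewrite !mxE (bigD1 a) //= big1 ?addr0 // => l la.
by rewrite dD ?mul0r // eq_sym.
Qed.

Lemma eig_support n k (P : 'M[C]_n) T i p v a :
  P \in unitmx -> (forall t, (1 <= t <= k.-1)%N -> is_diag_mx (Dm P T t)) ->
  size p = (k.-1 - i)%N -> inV k T i p v -> (invmx P *m v) a 0 != 0 ->
  tau k P T i a = p.
Proof.
move=> u Hd sp Hv wa.
apply: (@eq_from_nth _ 0); first by rewrite size_mkseq.
move=> j; rewrite size_mkseq => hj; rewrite nth_mkseq //.
have e := Hv j hj.
have : Dm P T (i.+1 + j)%N *m (invmx P *m v) = p`_j *: (invmx P *m v).
  by rewrite /Dm -!mulmxA mulKVmx // e -scalemxAr.
have dd : is_diag_mx (Dm P T (i.+1 + j)%N) by apply: Hd; lia.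
move/matrixP/(_ a 0); rewrite diag_col //.
by rewrite [RHS]mxE; apply: (mulIf wa).
Qed.

Lemma ev_eig n k (P : 'M[C]_n) T i a :
  P \in unitmx -> (forall t, (1 <= t <= k.-1)%N -> is_diag_mx (Dm P T t)) ->
  inV k T i (tau k P T i a) (ev P a).
Proof.
move=> u Hd j hj; rewrite nth_mkseq // /ev.
have -> : T (i.+1 + j)%N *m (P *m (delta_mx a 0 : 'cV[C]_n)) = P *m (Dm P T (i.+1 + j)%N *m delta_mx a 0).
  by rewrite /Dm !mulmxA mulmxV // mul1mx.
rewrite scalemxAr; congr (P *m _); apply/matrixP => x y; rewrite (ord1 y).
have dd : is_diag_mx (Dm P T (i.+1 + j)%N) by apply: Hd; lia.
rewrite diag_col //; case: (eqVneq x a) => [->|xa]; first by rewrite [RHS]mxE mulrC.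
have dx : (delta_mx a 0 : 'cV[C]_n) x 0 = 0 by rewrite mxE (negbTE xa).
by rewrite [RHS]mxE dx !mulr0.
Qed.

Lemma ev_neq0 n (P : 'M[C]_n) a : P \in unitmx -> ev P a != 0.
Proof.
move=> u; apply/eqP => e.
have : invmx P *m ev P a = 0 by rewrite e mulmx0.
rewrite /ev mulKmx // => /matrixP /(_ a 0); rewrite !mxE !eqxx /=.
by move/eqP; rewrite oner_eq0.
Qed.

Lemma tau_J n k (P : 'M[C]_n) T i a :
  P \in unitmx -> (forall t, (1 <= t <= k.-1)%N -> is_diag_mx (Dm P T t)) ->
  inJ k T i (tau k P T i a).
Proof.
move=> u Hd; split; first by rewrite size_mkseq.
by exists (ev P a); split; [apply: ev_neq0 | apply: ev_eig].
Qed.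

Lemma colE n (M : 'M[C]_n) a l : (M *m (delta_mx l 0 : 'cV[C]_n)) a 0 = M a l.
Proof.
rewrite mxE (bigD1 l) //= mxE !eqxx mulr1 big1 ?addr0 // => j jl.
by rewrite mxE (negbTE jl) mulr0.
Qed.

Lemma bs_zero n k (P : 'M[C]_n) T i sel X :
  P \in unitmx -> (forall t, (1 <= t <= k.-1)%N -> is_diag_mx (Dm P T t)) ->
  block_sum k T i sel X ->
  forall a l, ~ sel (tau k P T i l) (tau k P T i a) -> cj P X a l = 0.
Proof.
move=> u Hd Hb a l ns.
have [s [Hs e]] := Hb _ _ (tau_J i l u Hd) (@ev_eig _ _ _ _ i l u Hd).
have -> : cj P X a l = (invmx P *m (X *m ev P l)) a 0.
  by rewrite /cj /ev !mulmxA colE.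
rewrite e mulmx_sumr summxE big1_seq // => x /andP [_ xs].
case: (Hs x xs) => J sl V; apply/eqP; apply: contraT => nz.
have ea := eig_support u Hd J.1 V nz.
by exfalso; apply: ns; rewrite ea.
Qed.

Lemma bs_of_zero n k (P : 'M[C]_n) T i (sel : seq C -> seq C -> Prop) X :
  P \in unitmx -> (forall t, (1 <= t <= k.-1)%N -> is_diag_mx (Dm P T t)) ->
  (forall a l, ~ sel (tau k P T i l) (tau k P T i a) -> cj P X a l = 0) ->
  block_sum k T i sel X.
Proof.
move=> u Hd Hz p v Jp Vp.
pose w := invmx P *m v; pose y := cj P X *m w.
have Xv : X *m v = P *m y by rewrite /y /w /cj !mulmxA mulmxV // mul1mx mulmxK.
have ye : y = \sum_a (y a 0 *: (delta_mx a 0 : 'cV[C]_n)).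
  by rewrite {1}(matrix_sum_delta y); apply: eq_bigr => a _; rewrite big_ord1.
exists [seq (tau k P T i a, y a 0 *: ev P a) | a <- [seq a <- index_enum 'I_n | y a 0 != 0]].
split.
- move=> x /mapP [a]; rewrite mem_filter => /andP [nz _] ->; split => /=.
  + exact: tau_J.
  + apply: NNPP => ns; move/eqP: nz; apply; rewrite /y mxE; apply: big1 => l _.
    case: (eqVneq (w l 0) 0) => [->|wl]; first by rewrite mulr0.
    by rewrite Hz ?mul0r // (eig_support u Hd Jp.1 Vp wl).
  + move=> j hj; rewrite -scalemxAr (@ev_eig _ _ _ _ i a u Hd j hj).
    by rewrite !scalerA mulrC.
- rewrite Xv {1}ye mulmx_sumr big_map big_filter.
  rewrite (bigID (fun a => y a 0 != 0)) /= [X in _ + X]big1 ?addr0.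
    by apply: eq_bigr => a _; rewrite -scalemxAr.
  by move=> a /negPn/eqP ->; rewrite scale0r mulmx0.
Qed.

Lemma cjD n (P A B : 'M[C]_n) : cj P (A + B) = cj P A + cj P B.
Proof. by rewrite /cj mulmxDr mulmxDl. Qed.
Lemma cjB n (P A B : 'M[C]_n) : cj P (A - B) = cj P A - cj P B.
Proof. by rewrite /cj mulmxBr mulmxBl. Qed.

Lemma level_exists n k (P : 'M[C]_n) T ord i X :
  P \in unitmx -> (forall t, (1 <= t <= k.-1)%N -> is_diag_mx (Dm P T t)) ->
  ((i < k.-1)%N -> strict_total_on (inJ k T i) (ord i)) ->
  exists Xm Xp, [/\ in_uminus k T ord i Xm, in_pplus k T ord i Xp & X = Xm + Xp].
Proof.
move=> u Hd Hst; rewrite /in_uminus /in_pplus; case hi: (i < k.-1)%N; last first.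
  by exists 0, X; split => //; rewrite add0r.
have [irr tr tot] := Hst hi.
pose Xm' := \matrix_(a, l) if pdec (ord i (tau k P T i l) (tau k P T i a))
                           then cj P X a l else 0 : C.
pose Xm := P *m Xm' *m invmx P.
have cm : cj P Xm = Xm' by rewrite /cj /Xm !mulmxA mulVmx // mul1mx mulmxKV.
exists Xm, (X - Xm); split; last by rewrite addrC subrK.
- apply: (bs_of_zero u Hd) => a l ns; rewrite cm mxE; case: pdecP => // .
- apply: (bs_of_zero u Hd) => a l ns; rewrite cjB cm /Xm'; move: (cj P X) => Y; rewrite !mxE.
  case: pdecP => h; first by rewrite subrr.
  exfalso; apply: ns.
  case: (eqVneq (tau k P T i a) (tau k P T i l)) => [->|ne]; first by left.
  right; case: (tot _ _ (tau_J i a u Hd) (tau_J i l u Hd) (elimN eqP ne)) => //.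
Qed.

Lemma level_unique n k (P : 'M[C]_n) T ord i Ym Yp Ym' Yp' :
  P \in unitmx -> (forall t, (1 <= t <= k.-1)%N -> is_diag_mx (Dm P T t)) ->
  ((i < k.-1)%N -> strict_total_on (inJ k T i) (ord i)) ->
  in_uminus k T ord i Ym -> in_pplus k T ord i Yp ->
  in_uminus k T ord i Ym' -> in_pplus k T ord i Yp' ->
  Ym + Yp = Ym' + Yp' -> Ym = Ym' /\ Yp = Yp'.
Proof.
move=> u Hd Hst; rewrite /in_uminus /in_pplus; case: ifP => hi; last first.
  by move=> -> _ -> _; rewrite !add0r.
have [irr tr tot] := Hst hi.
move=> Hm Hp Hm' Hp' e.
suff eq : Ym = Ym' by split => //; move: e; rewrite eq => /addrI.
apply: (cjI u); apply/matrixP => a l.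
move/(congr1 (cj P)): e; rewrite !cjD => /matrixP/(_ a l).
rewrite [LHS]mxE [RHS]mxE => ce.
have Ja := tau_J i a u Hd; have Jl := tau_J i l u Hd.
case: (pdecP (ord i (tau k P T i l) (tau k P T i a))) => h.
  have ns : ~ (tau k P T i a = tau k P T i l \/ ord i (tau k P T i a) (tau k P T i l)).
    case=> [e'|o]; first by rewrite e' in h; exact: (irr _ Jl h).
    exact: (irr _ Jl (tr _ _ _ Jl Ja Jl h o)).
  by rewrite (bs_zero u Hd Hp ns) (bs_zero u Hd Hp' ns) !addr0 in ce.
by rewrite (bs_zero u Hd Hm h) (bs_zero u Hd Hm' h).
Qed.

Lemma trunc_split n (bm bp : nat -> 'M[C]_n) N : bm 0%N = 1%:M -> bp 0%N = 1%:M ->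
  trunc_mul bm bp N.+1 = bp N.+1 + bm N.+1 + \sum_(j < N) bm j.+1 *m bp (N - j)%N.
Proof.
move=> h0 h1; rewrite /trunc_mul big_ord_recl big_ord_recr /=.
rewrite h0 mul1mx subn0 subnn h1 mulmx1.
have -> : \sum_(i < N) bm (lift ord0 (widen_ord (leqnSn N) i)) *m
            bp (N.+1 - lift ord0 (widen_ord (leqnSn N) i))%N
        = \sum_(j < N) bm j.+1 *m bp (N - j)%N.
  by apply: eq_bigr => j _.
by rewrite -addrA (addrC _ (bm N.+1)) addrA.
Qed.

Theorem lemma3p5 (n k : nat) (P : 'M[C]_n) (T : nat -> 'M[C]_n)
    (ord : nat -> seq C -> seq C -> Prop) :
  (1 < k)%N ->
  P \in unitmx ->
  (forall i : nat, (1 <= i <= k.-1)%N -> in_cartan P (T i)) ->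
  T k.-1 != 0 ->
  (forall i : nat, (i <= k - 2)%N -> strict_total_on (inJ k T i) (ord i)) ->
  (forall (i : nat) (p q : seq C), (i < k - 2)%N ->
     inJ k T i p -> inJ k T i q ->
     ord i.+1 (behead p) (behead q) -> ord i p q) ->
  forall b : nat -> 'M[C]_n, inB b ->
    (exists bm bp : nat -> 'M[C]_n,
       [/\ in_Uminus k T ord bm, in_Pplus k T ord bp & eqk k b (trunc_mul bm bp)])
    /\
    (forall bm bp bm' bp' : nat -> 'M[C]_n,
       in_Uminus k T ord bm -> in_Pplus k T ord bp -> eqk k b (trunc_mul bm bp) ->
       in_Uminus k T ord bm' -> in_Pplus k T ord bp' -> eqk k b (trunc_mul bm' bp') ->
       eqk k bm bm' /\ eqk k bp bp').
Proof.
move=> hk u Hc _ Hst _ b hb.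
have Hd : forall t, (1 <= t <= k.-1)%N -> is_diag_mx (Dm P T t).
  by move=> t ht; apply: (diag_of u (Hc t ht)).
have Hst' : forall i, (i < k.-1)%N -> strict_total_on (inJ k T i) (ord i).
  by move=> i hi; apply: Hst; lia.
split.
  have Q : forall N, exists bm bp : nat -> 'M[C]_n,
      [/\ inB bm, inB bp,
          (forall i, (1 <= i <= N)%N -> in_uminus k T ord i (bm i) /\ in_pplus k T ord i (bp i))
        & (forall m, (m <= N)%N -> b m = trunc_mul bm bp m)].
    elim=> [|N [bm [bp [h0 h1 hl he]]]].
      exists (fun _ => 1%:M), (fun _ => 1%:M); split => //.
        by move=> i; lia.
      by move=> m; rewrite leqn0 => /eqP ->; rewrite /trunc_mul big_ord1 mulmx1 hb.
    pose Mid := \sum_(j < N) bm j.+1 *m bp (N - j)%N.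
    have [Ym [Yp [hm hp eY]]] := @level_exists _ _ _ _ ord N.+1 (b N.+1 - Mid) u Hd (Hst' N.+1).
    pose bm' := fun x => if x == N.+1 then Ym else bm x.
    pose bp' := fun x => if x == N.+1 then Yp else bp x.
    exists bm', bp'; split.
    - exact: h0.
    - exact: h1.
    - move=> i /andP [i1 iN]; rewrite /bm' /bp'; case: eqP => [->|ne]; first by split.
      by apply: hl; lia.
    - move=> m; rewrite leq_eqVlt => /orP [/eqP ->|lt].
        rewrite trunc_split //.
        have -> : \sum_(j < N) bm' j.+1 *m bp' (N - j)%N = Mid.
          apply: eq_bigr => j _; rewrite /bm' /bp'.
          have -> : (j.+1 == N.+1) = false by apply/eqP; move: (ltn_ord j); lia.
          have -> : ((N - j)%N == N.+1) = false by apply/eqP; lia.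
          by [].
        by rewrite /bm' /bp' !eqxx (addrC Yp) -eY subrK.
      rewrite he; last by lia.
      apply: eq_bigr => j _; rewrite /bm' /bp'.
      have -> : (nat_of_ord j == N.+1) = false by apply/eqP; move: (ltn_ord j); lia.
      have -> : ((m - j)%N == N.+1) = false by apply/eqP; lia.
      by [].
  have [bm [bp [h0 h1 hl he]]] := Q k.
  exists bm, bp; split.
  - split => // i hi; have := hl i; case; first by lia.
    by [].
  - split => // i hi; have := hl i; case; first by lia.
    by [].
  - by move=> m hm; apply: he; lia.
move=> bm bp bm' bp' [m0 Hm] [p0 Hp] e [m0' Hm'] [p0' Hp'] e'.
suff H : forall N m, (m <= N)%N -> (m < k)%N -> bm m = bm' m /\ bp m = bp' m.
  by split => m hm; have := H m m (leqnn m) hm; case.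
elim=> [|N IH] m.
  by rewrite leqn0 => /eqP -> _; rewrite m0 m0' p0 p0'.
rewrite leq_eqVlt => /orP [/eqP ->|lt] hk'; last by apply: IH.
have E1 := e N.+1 hk'; have E2 := e' N.+1 hk'.
rewrite trunc_split // in E1; rewrite trunc_split // in E2.
have mid : \sum_(j < N) bm j.+1 *m bp (N - j)%N = \sum_(j < N) bm' j.+1 *m bp' (N - j)%N.
  apply: eq_bigr => j _.
  have lj := ltn_ord j.
  have [a1 _] : bm j.+1 = bm' j.+1 /\ bp j.+1 = bp' j.+1 by apply: IH; lia.
  have [_ b2] : bm (N - j)%N = bm' (N - j)%N /\ bp (N - j)%N = bp' (N - j)%N.
    by apply: IH; lia.
  by rewrite a1 b2.
have eq : bm N.+1 + bp N.+1 = bm' N.+1 + bp' N.+1.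
  apply: (addIr (\sum_(j < N) bm j.+1 *m bp (N - j)%N)).
  by rewrite (addrC (bm N.+1)) -E1 mid (addrC (bm' N.+1)) -E2.
apply: (level_unique u Hd (Hst' N.+1)) => //.
- by apply: Hm; lia.
- by apply: Hp; lia.
- by apply: Hm'; lia.
- by apply: Hp'; lia.
Qed.
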